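(* Let $\Phi_U$ be a pmf on a finite set $\mathcal U$ and $\Phi_{V|U}$ a channel to a finite set $\mathcal V$, with induced $\Phi_V$. Let $\mathcal B^{(n)}=\{u^n(j)\}_{j=1}^{2^{nR}}$ be a random codebook whose codewords are drawn mutually independently, each i.i.d. according to $\Phi_U$, and let $P_{V^n}(v^n)=2^{-nR}\sum_{j}\prod_{t=1}^n\Phi_{V|U}(v_t|u_t(j))$ be the induced output distribution, with desired distribution $Q_{V^n}=\prod_{t=1}^n\Phi_V(v_t)$. If $R>I_\Phi(U;V)$ then $\lim_{n\to\infty}\mathbf E\|P_{V^n}-Q_{V^n}\|_{TV}=0$, where the expectation is over the random codebook. Moreover, for every $n$, $$\mathbf E\|P_{V^n}-Q_{V^n}\|_{TV}\le \tfrac32\,2^{-\gamma n},$$ where $$\gamma=\max_{\beta\ge0,\beta'\ge0,(\beta,\beta')\neq(0,0)}\frac{1}{2\beta+\beta'}\Big(-\beta'\log\mathbf E_\Phi Z^{\beta}-2\beta\log \mathbf E_{\Phi_V}\sqrt{\mathbf E_{\Phi_{U|V}}Z^{1-\beta'}}\Big),\qquad Z=2^{-R}\frac{\Phi_{U,V}(U,V)}{\Phi_U(U)\Phi_V(V)}.$$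
   Context: Total variation $\|P-Q\|_{TV}=\frac12\sum|P-Q|$. All logarithms are base 2 and $R$ is in bits ($2^{nR}$ treated as an integer). $\mathbf E_\Phi$ is expectation under $\Phi_{U,V}=\Phi_U\Phi_{V|U}$; in $\mathbf E_{\Phi_V}\sqrt{\mathbf E_{\Phi_{U|V}}(\cdot)}$ the inner expectation is over $U$ given $V$ and the outer over $V$. *)

(* Defs.v *)
From Stdlib Require Import Reals.
From mathcomp Require Import all_boot.
Set Implicit Arguments. Unset Strict Implicit. Unset Printing Implicit Defensive.

Local Open Scope R_scope.

Definition rsum (T : finType) (f : T -> R) : R := \big[Rplus/0]_(x : T) f x.
Definition rprod (T : finType) (f : T -> R) : R := \big[Rmult/1]_(x : T) f x.

Definition log2 (x : R) : R := ln x / ln 2.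

(* ceiling of a real, as an integer *)
Definition ceilZ (x : R) : Z := (- (up (- x) - 1))%Z.

(* codebook size 2^{nR}, rounded up to an integer *)
Definition cbsize (R0 : R) (n : nat) : nat := Z.to_nat (ceilZ (Rpower 2 (INR n * R0))).

Section Defs.
Variables (U V : finType) (pU : U -> R) (W : U -> V -> R).

Definition is_pmf (T : finType) (p : T -> R) : Prop :=
  (forall x, 0 <= p x) /\ rsum p = 1.

Definition is_channel : Prop := forall u, is_pmf (W u).

Definition pUV (u : U) (v : V) : R := pU u * W u v.
Definition pV (v : V) : R := rsum (fun u => pUV u v).

Definition mutinfo : R :=
  rsum (fun u => rsum (fun v =>
    if Rlt_dec 0 (pUV u v) then pUV u v * log2 (pUV u v / (pU u * pV v)) else 0)).

Definition Zrv (R0 : R) (u : U) (v : V) : R :=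
  Rpower 2 (- R0) * (pUV u v / (pU u * pV v)).

Definition EZpow (R0 b : R) : R :=
  rsum (fun u => rsum (fun v => pUV u v * Rpower (Zrv R0 u v) b)).

Definition ESqrtZ (R0 b' : R) : R :=
  rsum (fun v => pV v *
    sqrt (rsum (fun u => (pUV u v / pV v) * Rpower (Zrv R0 u v) (1 - b')))).

(* the objective whose max over (beta,beta') is gamma *)
Definition gammaf (R0 b b' : R) : R :=
  / (2 * b + b') * (- b' * log2 (EZpow R0 b) - 2 * b * log2 (ESqrtZ R0 b')).

Definition codebook (M n : nat) := {ffun 'I_M -> {ffun 'I_n -> U}}.

Definition cbprob (M n : nat) (c : codebook M n) : R :=
  \big[Rmult/1]_(j < M) \big[Rmult/1]_(t < n) pU (c j t).

Definition PVn (M n : nat) (c : codebook M n) (v : {ffun 'I_n -> V}) : R :=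
  / INR M * \big[Rplus/0]_(j < M) \big[Rmult/1]_(t < n) W (c j t) (v t).

Definition QVn (n : nat) (v : {ffun 'I_n -> V}) : R :=
  \big[Rmult/1]_(t < n) pV (v t).

Definition tvPQ (M n : nat) (c : codebook M n) : R :=
  / 2 * rsum (fun v : {ffun 'I_n -> V} => Rabs (PVn c v - QVn v)).

Definition ETV (R0 : R) (n : nat) : R :=
  rsum (fun c : codebook (cbsize R0 n) n => cbprob c * tvPQ c).

End Defs.

(* Main.v *)
Require Import Defs.
From HB Require Import structures.
From Stdlib Require Import Reals Lra Classical FunctionalExtensionality ZArith.
From mathcomp Require Import all_boot.
Set Implicit Arguments. Unset Strict Implicit. Unset Printing Implicit Defensive.
Open Scope R_scope.

Lemma Rplus_assoc' : associative Rplus. Proof. by move=> x y z; rewrite Rplus_assoc. Qed.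
Lemma Rmult_assoc' : associative Rmult. Proof. by move=> x y z; rewrite Rmult_assoc. Qed.
HB.instance Definition _ := Monoid.isComLaw.Build R 0 Rplus Rplus_assoc' Rplus_comm Rplus_0_l.
HB.instance Definition _ := Monoid.isComLaw.Build R 1 Rmult Rmult_assoc' Rmult_comm Rmult_1_l.
HB.instance Definition _ := Monoid.isMulLaw.Build R 0 Rmult Rmult_0_l Rmult_0_r.
HB.instance Definition _ := Monoid.isAddLaw.Build R Rmult Rplus Rmult_plus_distr_r Rmult_plus_distr_l.

Section Gen.
Variable I : Type.
Implicit Types (r : seq I) (P : pred I) (F G : I -> R).

Lemma sum_le r P F G : (forall i, P i -> F i <= G i) ->
  \big[Rplus/0]_(i <- r | P i) F i <= \big[Rplus/0]_(i <- r | P i) G i.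
Proof.
move=> h; apply: (big_ind2 (fun a b => a <= b)) => //; first lra.
by move=> *; lra.
Qed.

Lemma sum_ge0 r P F : (forall i, P i -> 0 <= F i) -> 0 <= \big[Rplus/0]_(i <- r | P i) F i.
Proof. move=> h; apply: (big_ind (fun a => 0 <= a)) => //; [lra | move=> *; lra]. Qed.

Lemma prod_ge0 r P F : (forall i, P i -> 0 <= F i) -> 0 <= \big[Rmult/1]_(i <- r | P i) F i.
Proof. move=> h; apply: (big_ind (fun a => 0 <= a)) => //; [lra | move=> *; nra]. Qed.

Lemma prod_gt0 r P F : (forall i, P i -> 0 < F i) -> 0 < \big[Rmult/1]_(i <- r | P i) F i.
Proof. move=> h; apply: (big_ind (fun a => 0 < a)) => //; [lra | move=> *; nra]. Qed.

Lemma sqrt_prod r P F : (forall i, P i -> 0 <= F i) ->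
  sqrt (\big[Rmult/1]_(i <- r | P i) F i) = \big[Rmult/1]_(i <- r | P i) sqrt (F i).
Proof.
move=> h.
suff : 0 <= \big[Rmult/1]_(i <- r | P i) F i /\ sqrt (\big[Rmult/1]_(i <- r | P i) F i) = \big[Rmult/1]_(i <- r | P i) sqrt (F i) by case.
apply: (big_rec2 (fun a b => 0 <= a /\ sqrt a = b)) => [|i y1 y2 Pi [IH1 IH2]].
  by split; [lra| exact: sqrt_1].
have h1 := h i Pi; split; first nra.
by rewrite sqrt_mult // IH2.
Qed.

Lemma rpower_prod r P F b : (forall i, P i -> 0 < F i) ->
  Rpower (\big[Rmult/1]_(i <- r | P i) F i) b = \big[Rmult/1]_(i <- r | P i) Rpower (F i) b.
Proof.
move=> h.
suff : 0 < \big[Rmult/1]_(i <- r | P i) F i /\ Rpower (\big[Rmult/1]_(i <- r | P i) F i) b = \big[Rmult/1]_(i <- r | P i) Rpower (F i) b by case.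
apply: (big_rec2 (fun a c => 0 < a /\ Rpower a b = c)) => [|i y1 y2 Pi [IH1 IH2]].
  by split; [lra| rewrite /Rpower ln_1 Rmult_0_r exp_0].
have h1 := h i Pi; split; first nra.
by rewrite -Rpower_mult_distr // IH2.
Qed.

Lemma prod_const_ord n (a : R) : \big[Rmult/1]_(t < n) a = a ^ n.
Proof. elim: n => [|n IH]; first by rewrite big_ord0.
by rewrite big_ord_recr /= IH; ring. Qed.

Lemma sum_const_ord n (a : R) : \big[Rplus/0]_(t < n) a = INR n * a.
Proof. elim: n => [|n IH]; first by rewrite big_ord0 /=; ring.
rewrite big_ord_recr IH S_INR /=. ring. Qed.

End Gen.

Section Fin.
Variable T : finType.
Implicit Types (p f g : T -> R).

Lemma sum_add f g : \big[Rplus/0]_(x : T) (f x + g x) = \big[Rplus/0]_x f x + \big[Rplus/0]_x g x.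
Proof. exact: big_split. Qed.

Lemma sum_scal a f : \big[Rplus/0]_(x : T) (a * f x) = a * \big[Rplus/0]_x f x.
Proof. by rewrite big_distrr. Qed.

Lemma var_expand p f m : \big[Rplus/0]_(x : T) p x = 1 ->
  \big[Rplus/0]_(x : T) (p x * (f x - m) ^ 2) =
  \big[Rplus/0]_(x : T) (p x * f x ^ 2) - 2 * m * \big[Rplus/0]_(x : T) (p x * f x) + m ^ 2.
Proof.
move=> hp.
rewrite (eq_bigr (fun x => p x * f x ^ 2 + ((- 2 * m) * (p x * f x) + m ^ 2 * p x))); last first.
  by move=> x _; ring.
rewrite !sum_add !sum_scal hp; ring.
Qed.

Lemma cauchy_schwarz p f : (forall x, 0 <= p x) -> \big[Rplus/0]_(x : T) p x = 1 ->
  \big[Rplus/0]_(x : T) (p x * Rabs (f x)) <= sqrt (\big[Rplus/0]_(x : T) (p x * f x ^ 2)).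
Proof.
move=> p0 hp.
set m := \big[Rplus/0]_(x : T) (p x * Rabs (f x)).
have m0 : 0 <= m by apply: sum_ge0 => x _; have := Rabs_pos (f x); have := p0 x; nra.
have h := var_expand (fun x => Rabs (f x)) m hp.
have h0 : 0 <= \big[Rplus/0]_(x : T) (p x * (Rabs (f x) - m) ^ 2).
  apply: sum_ge0 => x _; have := p0 x; have := pow2_ge_0 (Rabs (f x) - m); nra.
have e : \big[Rplus/0]_(x : T) (p x * Rabs (f x) ^ 2) = \big[Rplus/0]_(x : T) (p x * f x ^ 2).
  by apply: eq_bigr => x _; rewrite -Rsqr_pow2 -Rsqr_abs Rsqr_pow2.
rewrite -/m e in h.
rewrite -(sqrt_pow2 m m0); apply: sqrt_le_1_alt; nra.
Qed.
End Fin.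

Lemma prod_pick1 (I : finType) j0 (F : I -> R) :
  \big[Rmult/1]_(i : I) (if i == j0 then F i else 1) = F j0.
Proof. by rewrite -big_mkcond big_pred1_eq. Qed.

Lemma sum_pick1 (I : finType) j0 (F : I -> R) :
  \big[Rplus/0]_(i : I) (if i == j0 then F i else 0) = F j0.
Proof. by rewrite -big_mkcond big_pred1_eq. Qed.

Lemma prod_pick2 (I : finType) j0 k0 (F G : I -> R) : j0 != k0 ->
  \big[Rmult/1]_(i : I) (if i == j0 then F i else if i == k0 then G i else 1) = F j0 * G k0.
Proof.
move=> jk; rewrite (bigD1 j0) //= eqxx; congr (_ * _).
rewrite (eq_bigr (fun i => if i == k0 then G i else 1)); last first.
  by move=> i /negbTE ->.
rewrite (bigD1 k0) /=; last by rewrite eq_sym.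
rewrite eqxx big1 ?Rmult_1_r // => i /andP [_ /negbTE ->] //.
Qed.

Section CB.
Variables (X : finType) (px : X -> R) (M : nat).
Hypotheses (px0 : forall x, 0 <= px x) (px1 : \big[Rplus/0]_(x : X) px x = 1).

Definition cw (c : {ffun 'I_M -> X}) := \big[Rmult/1]_(j < M) px (c j).
Definition Ec (F : {ffun 'I_M -> X} -> R) := \big[Rplus/0]_(c : {ffun 'I_M -> X}) (cw c * F c).

Lemma cw0 c : 0 <= cw c. Proof. by apply: prod_ge0. Qed.

Lemma Ec_prod (G : 'I_M -> X -> R) :
  Ec (fun c => \big[Rmult/1]_(j < M) G j (c j)) = \big[Rmult/1]_(j < M) \big[Rplus/0]_(x : X) (px x * G j x).
Proof.
rewrite bigA_distr_bigA /Ec; apply: eq_bigr => c _; by rewrite /cw -big_split.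
Qed.

Lemma Ec1 f j0 : Ec (fun c => f (c j0)) = \big[Rplus/0]_(x : X) (px x * f x).
Proof.
have := Ec_prod (fun j x => if j == j0 then f x else 1).
rewrite (eq_bigr (fun j => if j == j0 then \big[Rplus/0]_(x : X) (px x * f x) else 1)); last first.
  move=> j _; case: (j == j0) => //; rewrite -[RHS]px1; apply: eq_bigr => x _; ring.
rewrite prod_pick1 => <-; apply: eq_bigr => c _; congr (_ * _).
by rewrite (prod_pick1 j0 (fun i => f (c i))).
Qed.

Lemma Ec2 f g j0 k0 : j0 != k0 ->
  Ec (fun c => f (c j0) * g (c k0)) = \big[Rplus/0]_(x : X) (px x * f x) * \big[Rplus/0]_(x : X) (px x * g x).
Proof.
move=> jk.
have := Ec_prod (fun j x => if j == j0 then f x else if j == k0 then g x else 1).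
rewrite (eq_bigr (fun j => if j == j0 then \big[Rplus/0]_(x : X) (px x * f x)
    else if j == k0 then \big[Rplus/0]_(x : X) (px x * g x) else 1)); last first.
  move=> j _; case: (j == j0) => //; case: (j == k0) => //.
  rewrite -[RHS]px1; apply: eq_bigr => x _; ring.
rewrite prod_pick2 // => <-; apply: eq_bigr => c _; congr (_ * _).
by rewrite (prod_pick2 (fun i => f (c i)) (fun i => g (c i)) jk).
Qed.

Lemma cw1 : \big[Rplus/0]_(c : {ffun 'I_M -> X}) cw c = 1.
Proof.
rewrite /cw -(bigA_distr_bigA (fun (j : 'I_M) (x : X) => px x)).
by rewrite (eq_bigr (fun _ => 1)) ?big1_eq.
Qed.

Lemma Ec_const a : Ec (fun _ => a) = a.
Proof. by rewrite /Ec -big_distrl /= cw1 Rmult_1_l. Qed.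

Lemma Ec_add F G : Ec (fun c => F c + G c) = Ec F + Ec G.
Proof. rewrite /Ec -sum_add; apply: eq_bigr => c _ /=; ring. Qed.

Lemma Ec_scal a F : Ec (fun c => a * F c) = a * Ec F.
Proof. rewrite /Ec -sum_scal; apply: eq_bigr => c _; ring. Qed.

Lemma Ec_le F G : (forall c, F c <= G c) -> Ec F <= Ec G.
Proof. move=> h; apply: sum_le => c _; have := cw0 c; have := h c; nra. Qed.

Lemma Ec_sum (F : 'I_M -> {ffun 'I_M -> X} -> R) :
  Ec (fun c => \big[Rplus/0]_(j < M) F j c) = \big[Rplus/0]_(j < M) Ec (F j).
Proof.
rewrite /Ec; under eq_bigr do rewrite big_distrr; exact: exchange_big.
Qed.

Lemma Ec_var (d : X -> R) : \big[Rplus/0]_(x : X) (px x * d x) = 0 ->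
  Ec (fun c => (\big[Rplus/0]_(j < M) d (c j)) ^ 2) = INR M * \big[Rplus/0]_(x : X) (px x * d x ^ 2).
Proof.
move=> hd.
rewrite (_ : (fun c => _) = fun c : {ffun 'I_M -> X} => \big[Rplus/0]_(j < M) \big[Rplus/0]_(k < M) (d (c j) * d (c k))); last first.
  by apply: functional_extensionality => c; rewrite /= Rmult_1_r big_distrlr.
rewrite (Ec_sum (fun j (c : {ffun 'I_M -> X}) => \big[Rplus/0]_(k < M) (d (c j) * d (c k)))).
transitivity (\big[Rplus/0]_(j < M) \big[Rplus/0]_(x : X) (px x * d x ^ 2)); last exact: sum_const_ord.
apply: eq_bigr => j _.
rewrite (Ec_sum (fun k (c : {ffun 'I_M -> X}) => d (c j) * d (c k))).
rewrite (eq_bigr (fun k => if k == j then \big[Rplus/0]_(x : X) (px x * d x ^ 2) else 0)).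
  by rewrite sum_pick1.
move=> k _; case: eqP => [->|/eqP kj].
  rewrite (Ec1 (fun x => d x * d x)); apply: eq_bigr => x _; ring.
by rewrite (Ec2 d d); [rewrite hd; ring | rewrite eq_sym].
Qed.
End CB.

Lemma sum_sub (T : finType) (f g : T -> R) :
  \big[Rplus/0]_(x : T) (f x - g x) = \big[Rplus/0]_(x : T) f x - \big[Rplus/0]_(x : T) g x.
Proof.
transitivity (\big[Rplus/0]_(x : T) f x + (-1) * \big[Rplus/0]_(x : T) g x); last ring.
by rewrite -sum_scal -sum_add; apply: eq_bigr => x _; ring.
Qed.

Section CB2.
Variables (X : finType) (px : X -> R) (M : nat).
Hypotheses (px0 : forall x, 0 <= px x) (px1 : \big[Rplus/0]_(x : X) px x = 1) (M0 : 0 < INR M).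

Lemma y_bound (g h : X -> R) m1 m2 : (forall x, 0 <= h x) ->
  m1 = \big[Rplus/0]_(x : X) (px x * g x) -> m2 = \big[Rplus/0]_(x : X) (px x * h x) ->
  Ec px (fun c : {ffun 'I_M -> X} => Rabs (/ INR M * \big[Rplus/0]_(j < M) (g (c j) + h (c j)) - (m1 + m2)))
  <= 2 * m2 + sqrt (/ INR M * \big[Rplus/0]_(x : X) (px x * g x ^ 2)).
Proof.
move=> h0 e1 e2.
have Mn : INR M <> 0 by lra.
have sh (c : {ffun 'I_M -> X}) : 0 <= \big[Rplus/0]_(j < M) h (c j) by apply: sum_ge0.
have iM : 0 < / INR M by apply: Rinv_0_lt_compat.
apply: Rle_trans (_ : Ec px (fun c : {ffun 'I_M -> X} => Rabs (/ INR M * \big[Rplus/0]_(j < M) g (c j) - m1)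
    + / INR M * \big[Rplus/0]_(j < M) h (c j) + m2) <= _).
  apply: Ec_le => // c; rewrite sum_add.
  have := sh c; have hm2 : 0 <= m2 by rewrite e2; apply: sum_ge0 => x _; have := h0 x; have := px0 x; nra.
  move=> shc; have := Rmult_le_pos _ _ (Rlt_le _ _ iM) shc.
  move: (/ INR M) => a; move: (\big[Rplus/0]_(j < M) g (c j)) => G; move: (\big[Rplus/0]_(j < M) h (c j)) => H.
  move=> aH; rewrite Rmult_plus_distr_l.
  split_Rabs; lra.
rewrite !Ec_add (Ec_const M px1) Ec_scal (Ec_sum px (fun j (c : {ffun 'I_M -> X}) => h (c j))).
have -> : \big[Rplus/0]_(j < M) Ec px (fun c : {ffun 'I_M -> X} => h (c j)) = INR M * m2.
  by rewrite -sum_const_ord; apply: eq_bigr => j _; rewrite (Ec1 px1 h j) e2.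
rewrite Rplus_assoc (_ : / INR M * (INR M * m2) + m2 = 2 * m2); last by field.
suff : Ec px (fun c : {ffun 'I_M -> X} => Rabs (/ INR M * \big[Rplus/0]_(j < M) g (c j) - m1))
   <= sqrt (/ INR M * \big[Rplus/0]_(x : X) (px x * g x ^ 2)) by lra.
have CS := cauchy_schwarz (p:=@cw X px M) (fun c : {ffun 'I_M -> X} => / INR M * \big[Rplus/0]_(j < M) g (c j) - m1) (cw0 px0) (cw1 M px1).
rewrite /Ec; apply: Rle_trans CS _.
apply: sqrt_le_1_alt.
have key (c : {ffun 'I_M -> X}) : (/ INR M * \big[Rplus/0]_(j < M) g (c j) - m1) ^ 2 =
    (/ INR M) ^ 2 * (\big[Rplus/0]_(j < M) (g (c j) - m1)) ^ 2.
  have e : \big[Rplus/0]_(j < M) (g (c j) - m1) = \big[Rplus/0]_(j < M) g (c j) - INR M * m1.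
    by rewrite sum_sub sum_const_ord.
  by rewrite e; field.
rewrite (eq_bigr (fun c => cw px c * ((/ INR M) ^ 2 * (\big[Rplus/0]_(j < M) (g (c j) - m1)) ^ 2))); last first.
  by move=> c _; rewrite key.
have := Ec_scal px ((/ INR M) ^ 2) (fun c : {ffun 'I_M -> X} => (\big[Rplus/0]_(j < M) (g (c j) - m1)) ^ 2).
rewrite /Ec => ->.
have hd : \big[Rplus/0]_(x : X) (px x * (g x - m1)) = 0.
  rewrite (eq_bigr (fun x => px x * g x - m1 * px x)); last by move=> x _; ring.
  by rewrite sum_sub sum_scal px1 -e1; ring.
have := Ec_var M px1 (d := fun x => g x - m1) hd; rewrite /Ec => ->.
rewrite (var_expand g m1 px1) -e1.
have hs : 0 <= \big[Rplus/0]_(x : X) (px x * g x ^ 2).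
  by apply: sum_ge0 => x _; have := px0 x; have := pow2_ge_0 (g x); nra.
have -> : (/ INR M) ^ 2 * (INR M * (\big[Rplus/0]_(x : X) (px x * g x ^ 2) - 2 * m1 * m1 + m1 ^ 2))
  = / INR M * (\big[Rplus/0]_(x : X) (px x * g x ^ 2) - m1 ^ 2) by field.
have := pow2_ge_0 m1; nra.
Qed.
Lemma abs_bound (Y : finType) (w : X -> Y -> R) (q : Y -> R) (A : X -> Y -> bool) :
  (forall x y, 0 <= w x y) -> (forall y, q y = \big[Rplus/0]_(x : X) (px x * w x y)) ->
  \big[Rplus/0]_(c : {ffun 'I_M -> X}) (\big[Rmult/1]_(j < M) px (c j) *
     (/ 2 * \big[Rplus/0]_(y : Y) Rabs (/ INR M * \big[Rplus/0]_(j < M) w (c j) y - q y)))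
  <= \big[Rplus/0]_(x : X) \big[Rplus/0]_(y : Y) (if A x y then 0 else px x * w x y)
     + / 2 * \big[Rplus/0]_(y : Y) sqrt (/ INR M * \big[Rplus/0]_(x : X) (if A x y then px x * w x y ^ 2 else 0)).
Proof.
move=> w0 hq.
pose f (c : {ffun 'I_M -> X}) y := Rabs (/ INR M * \big[Rplus/0]_(j < M) w (c j) y - q y).
have E1 : \big[Rplus/0]_(c : {ffun 'I_M -> X}) (\big[Rmult/1]_(j < M) px (c j) *
     (/ 2 * \big[Rplus/0]_(y : Y) f c y)) = / 2 * \big[Rplus/0]_(y : Y) Ec px (fun c => f c y).
  rewrite -sum_scal /Ec.
  rewrite (eq_bigr (fun c => \big[Rplus/0]_(y : Y) (/ 2 * (cw px c * f c y)))); last first.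
    move=> c _; rewrite -(sum_scal (/ 2) (f c)) -sum_scal; apply: eq_bigr => y _; rewrite /cw; ring.
  rewrite exchange_big; apply: eq_bigr => y _; by rewrite sum_scal.
rewrite E1.
pose g y x := if A x y then w x y else 0.
pose h y x := if A x y then 0 else w x y.
have B y : Ec px (fun c => f c y) <= 2 * \big[Rplus/0]_(x : X) (px x * h y x)
   + sqrt (/ INR M * \big[Rplus/0]_(x : X) (px x * g y x ^ 2)).
  have -> : Ec px (fun c => f c y) = Ec px (fun c : {ffun 'I_M -> X} => Rabs (/ INR M * \big[Rplus/0]_(j < M) (g y (c j) + h y (c j))
        - (\big[Rplus/0]_(x : X) (px x * g y x) + \big[Rplus/0]_(x : X) (px x * h y x)))).
    rewrite /Ec; apply: eq_bigr => c _; congr (_ * Rabs (_ * _ - _)).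
      by apply: eq_bigr => j _; rewrite /g /h; case: (A _ _); ring.
    by rewrite hq -sum_add; apply: eq_bigr => x _; rewrite /g /h; case: (A _ _); ring.
  apply: y_bound => //; by move=> x; rewrite /h; case: (A _ _) => //; lra.
apply: Rle_trans (_ : / 2 * \big[Rplus/0]_(y : Y) (2 * \big[Rplus/0]_(x : X) (px x * h y x)
   + sqrt (/ INR M * \big[Rplus/0]_(x : X) (px x * g y x ^ 2))) <= _).
  by apply: Rmult_le_compat_l; [lra | apply: sum_le => y _; apply: B].
rewrite sum_add -sum_scal Rmult_plus_distr_l -sum_scal.
apply: Rplus_le_compat; apply: Req_le.
  rewrite exchange_big /=; apply: eq_bigr => y _.
  have -> : / 2 * (2 * \big[Rplus/0]_(x : X) (px x * h y x)) = \big[Rplus/0]_(x : X) (px x * h y x) by field.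
  by apply: eq_bigr => x _; rewrite /h; case: (A _ _); ring.
rewrite -sum_scal; apply: eq_bigr => y _; congr (_ * sqrt (_ * _)).
by apply: eq_bigr => x _; rewrite /g; case: (A _ _); ring.
Qed.
End CB2.

Lemma sum_prod_ffun n (T : finType) (F : 'I_n -> T -> R) :
  \big[Rplus/0]_(x : {ffun 'I_n -> T}) \big[Rmult/1]_(t < n) F t (x t) = \big[Rmult/1]_(t < n) \big[Rplus/0]_(u : T) F t u.
Proof. by rewrite bigA_distr_bigA. Qed.

Lemma prod_mul (I : finType) (f g : I -> R) :
  \big[Rmult/1]_(i : I) (f i * g i) = \big[Rmult/1]_(i : I) f i * \big[Rmult/1]_(i : I) g i.
Proof. exact: big_split. Qed.

Lemma term_le_sum (I : finType) (F : I -> R) i0 : (forall i, 0 <= F i) -> F i0 <= \big[Rplus/0]_(i : I) F i.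
Proof.
move=> h; rewrite (bigD1 i0) //=.
have : 0 <= \big[Rplus/0]_(i | i != i0) F i by apply: sum_ge0.
lra.
Qed.

Lemma prod_zero (I : finType) (F : I -> R) i0 : F i0 = 0 -> \big[Rmult/1]_(i : I) F i = 0.
Proof. by move=> h; rewrite (bigD1 i0) //= h Rmult_0_l. Qed.

Lemma prod_pos_all (I : finType) (F : I -> R) : (forall i, 0 <= F i) ->
  0 < \big[Rmult/1]_(i : I) F i -> forall i, 0 < F i.
Proof.
move=> h hp i; case: (Rle_lt_or_eq_dec _ _ (h i)) => // e.
by rewrite (prod_zero (esym e)) in hp; lra.
Qed.

Lemma prod_mix (I : finType) (p z : I -> R) b : (forall i, 0 <= p i) -> (forall i, 0 < p i -> 0 < z i) ->
  \big[Rmult/1]_(i : I) p i * Rpower (\big[Rmult/1]_(i : I) z i) b = \big[Rmult/1]_(i : I) (p i * Rpower (z i) b).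
Proof.
move=> p0 pz.
case: (classic (exists i, p i = 0)) => [[i0 e]|ne].
  rewrite (prod_zero e) Rmult_0_l; symmetry; apply: (prod_zero (i0 := i0)); rewrite e; ring.
have pp i : 0 < p i.
  case: (Rle_lt_or_eq_dec _ _ (p0 i)) => // e; by case: ne; exists i.
by rewrite rpower_prod ?prod_mul // => i _; apply: pz.
Qed.

Section Main.
Variables (U V : finType) (pU : U -> R) (W : U -> V -> R) (R0 : R).
Hypotheses (hpU : is_pmf pU) (hW : is_channel W).

Lemma pU0 u : 0 <= pU u. Proof. by case: hpU. Qed.
Lemma W0 u v : 0 <= W u v. Proof. by case: (hW u). Qed.
Lemma pUV0 u v : 0 <= pUV pU W u v. Proof. rewrite /pUV; have := pU0 u; have := W0 u v; nra. Qed.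
Lemma pV0 v : 0 <= pV pU W v. Proof. by apply: sum_ge0 => u _; apply: pUV0. Qed.
Lemma pUV_le u v : pUV pU W u v <= pV pU W v.
Proof. rewrite /pV /rsum; exact: (term_le_sum (F := fun u => pUV pU W u v) u (fun u => pUV0 u v)). Qed.

Lemma sum_pUV : \big[Rplus/0]_(u : U) \big[Rplus/0]_(v : V) pUV pU W u v = 1.
Proof.
case: hpU => _ h1; rewrite -[RHS]h1; apply: eq_bigr => u _.
rewrite /pUV sum_scal; case: (hW u) => _; rewrite /rsum => ->; ring.
Qed.

Lemma pUV_pos u v : 0 < pUV pU W u v -> 0 < pU u /\ 0 < W u v /\ 0 < pV pU W v.
Proof.
move=> h; have := pU0 u; have := W0 u v; have := pUV_le u v; rewrite /pUV in h *.
move=> h1 h2 h3.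
have hu : 0 < pU u by case: (Rle_lt_or_eq_dec _ _ h3) => // e; rewrite -e in h; nra.
have hw : 0 < W u v by case: (Rle_lt_or_eq_dec _ _ h2) => // e; rewrite -e in h; nra.
split => //; split => //; nra.
Qed.

Lemma Zrv_pos u v : 0 < pUV pU W u v -> 0 < Zrv pU W R0 u v.
Proof.
move=> h; have [h1 [h2 h3]] := pUV_pos h.
rewrite /Zrv; apply: Rmult_lt_0_compat; first exact: exp_pos.
apply: Rdiv_lt_0_compat => //; nra.
Qed.

Lemma Zrv_pV u v : 0 < pUV pU W u v -> Zrv pU W R0 u v * pV pU W v = Rpower 2 (- R0) * W u v.
Proof.
move=> h; have [h1 [h2 h3]] := pUV_pos h.
rewrite /Zrv /pUV; field; lra.
Qed.

Lemma exists_pos : exists u v, 0 < pUV pU W u v.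
Proof.
apply: NNPP => ne.
have : \big[Rplus/0]_(u : U) \big[Rplus/0]_(v : V) pUV pU W u v = 0.
  rewrite big1 // => u _; rewrite big1 // => v _.
  case: (Rle_lt_or_eq_dec _ _ (pUV0 u v)) => // h; case: ne; by exists u, v.
rewrite sum_pUV; lra.
Qed.

Variable n : nat.
Definition px (x : {ffun 'I_n -> U}) := \big[Rmult/1]_(t < n) pU (x t).
Definition wx (x : {ffun 'I_n -> U}) (y : {ffun 'I_n -> V}) := \big[Rmult/1]_(t < n) W (x t) (y t).
Definition zn (x : {ffun 'I_n -> U}) (y : {ffun 'I_n -> V}) := \big[Rmult/1]_(t < n) Zrv pU W R0 (x t) (y t).

Lemma px0 x : 0 <= px x. Proof. by apply: prod_ge0 => t _; apply: pU0. Qed.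
Lemma wx0 x y : 0 <= wx x y. Proof. by apply: prod_ge0 => t _; apply: W0. Qed.
Lemma px1 : \big[Rplus/0]_(x : {ffun 'I_n -> U}) px x = 1.
Proof.
rewrite /px (sum_prod_ffun (fun _ u => pU u)) big1 // => t _; by case: hpU.
Qed.

Lemma pxw_prod x y : px x * wx x y = \big[Rmult/1]_(t < n) pUV pU W (x t) (y t).
Proof. by rewrite /px /wx -prod_mul. Qed.

Lemma q_eq y : QVn pU W y = \big[Rplus/0]_(x : {ffun 'I_n -> U}) (px x * wx x y).
Proof.
rewrite /QVn.
rewrite (eq_bigr (fun x : {ffun 'I_n -> U} => \big[Rmult/1]_(t < n) pUV pU W (x t) (y t))); last by move=> x _; rewrite pxw_prod.
rewrite (sum_prod_ffun (fun t u => pUV pU W u (y t))); done.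
Qed.

Lemma T1eq b : \big[Rplus/0]_(x : {ffun 'I_n -> U}) \big[Rplus/0]_(y : {ffun 'I_n -> V})
   (px x * wx x y * Rpower (zn x y) b) = EZpow pU W R0 b ^ n.
Proof.
rewrite -prod_const_ord.
rewrite (eq_bigr (fun x : {ffun 'I_n -> U} => \big[Rmult/1]_(t < n) \big[Rplus/0]_(v : V) (pUV pU W (x t) v * Rpower (Zrv pU W R0 (x t) v) b))).
  by rewrite (sum_prod_ffun (fun t u => \big[Rplus/0]_(v : V) (pUV pU W u v * Rpower (Zrv pU W R0 u v) b))).
move=> x _.
rewrite -(sum_prod_ffun (fun t v => pUV pU W (x t) v * Rpower (Zrv pU W R0 (x t) v) b)).
apply: eq_bigr => y _.
rewrite pxw_prod /zn (prod_mix (p := fun t => pUV pU W (x t) (y t))) //.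
  by move=> t; apply: pUV0.
by move=> t; apply: Zrv_pos.
Qed.

Lemma pw_all x y : 0 < px x * wx x y -> forall t, 0 < pUV pU W (x t) (y t).
Proof. rewrite pxw_prod; apply: prod_pos_all => t; exact: pUV0. Qed.

Lemma zn_pos x y : 0 < px x * wx x y -> 0 < zn x y.
Proof. move=> h; apply: prod_gt0 => t _; apply: Zrv_pos; exact: pw_all. Qed.

Lemma zq x y : 0 < px x * wx x y -> zn x y * QVn pU W y = Rpower 2 (- R0) ^ n * wx x y.
Proof.
move=> h; rewrite /zn /QVn -prod_mul.
rewrite (eq_bigr (fun t => Rpower 2 (- R0) * W (x t) (y t))); last first.
  by move=> t _; apply: Zrv_pV; apply: pw_all.
by rewrite prod_mul prod_const_ord.
Qed.

Definition Gf b' (v : V) := \big[Rplus/0]_(u : U) (pV pU W v * pUV pU W u v * Rpower (Zrv pU W R0 u v) b').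

Lemma Gf0 b' v : 0 <= Gf b' v.
Proof.
apply: sum_ge0 => u _; apply: Rmult_le_pos; first apply: Rmult_le_pos.
- exact: pV0.
- exact: pUV0.
- rewrite /Rpower; exact: Rlt_le (exp_pos _).
Qed.

Lemma G_eq b' y : \big[Rplus/0]_(x : {ffun 'I_n -> U}) (QVn pU W y * (px x * wx x y) * Rpower (zn x y) b')
  = \big[Rmult/1]_(t < n) Gf b' (y t).
Proof.
rewrite /Gf -(sum_prod_ffun (fun t u => pV pU W (y t) * pUV pU W u (y t) * Rpower (Zrv pU W R0 u (y t)) b')).
apply: eq_bigr => x _.
rewrite pxw_prod /QVn -prod_mul /zn (prod_mix (p := fun t => pV pU W (y t) * pUV pU W (x t) (y t))) //.
  by move=> t; have := pV0 (y t); have := pUV0 (x t) (y t); nra.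
move=> t ht; apply: Zrv_pos.
case: (Rle_lt_or_eq_dec _ _ (pUV0 (x t) (y t))) => // e; rewrite -e in ht; nra.
Qed.

Lemma ESqrt_eq b' : ESqrtZ pU W R0 b' = \big[Rplus/0]_(v : V) sqrt (Gf (1 - b') v).
Proof.
rewrite /ESqrtZ /rsum; apply: eq_bigr => v _.
case: (Rle_lt_or_eq_dec _ _ (pV0 v)) => hv.
  have -> : Gf (1 - b') v = pV pU W v ^ 2 * \big[Rplus/0]_(u : U) (pUV pU W u v / pV pU W v * Rpower (Zrv pU W R0 u v) (1 - b')).
    rewrite -sum_scal /Gf; apply: eq_bigr => u _; field; lra.
  rewrite sqrt_mult_alt ?sqrt_pow2 //; [lra | apply: pow2_ge_0].
rewrite -hv Rmult_0_l /Gf big1 ?sqrt_0 // => u _; rewrite -hv; ring.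
Qed.

Lemma cbsize_ge : Rpower 2 (INR n * R0) <= INR (cbsize R0 n) /\ 0 < INR (cbsize R0 n).
Proof.
rewrite /cbsize /ceilZ.
set x := Rpower 2 (INR n * R0).
have x0 : 0 < x by rewrite /x /Rpower; apply: exp_pos.
have [h1 h2] := archimed (- x).
set z := up (- x) in h1 h2 *.
have hz : x <= IZR (- (z - 1)) by rewrite opp_IZR minus_IZR; lra.
have hz0 : (0 <= - (z - 1))%Z by apply: le_IZR; lra.
rewrite INR_IZR_INZ Z2Nat.id //; lra.
Qed.

Lemma QVn0 (y : {ffun 'I_n -> V}) : 0 <= QVn pU W y. Proof. by apply: prod_ge0 => t _; apply: pV0. Qed.

Lemma Rpower_pos a b : 0 < Rpower a b. Proof. rewrite /Rpower; exact: exp_pos. Qed.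

Lemma invM_le : / INR (cbsize R0 n) <= Rpower 2 (- R0) ^ n.
Proof.
have [h1 h2] := cbsize_ge.
rewrite -Rpower_pow; last exact: Rpower_pos.
rewrite Rpower_mult (_ : - R0 * INR n = - (INR n * R0)); last ring.
rewrite Rpower_Ropp; apply: Rinv_le_contravar => //; exact: Rpower_pos.
Qed.

Lemma main_bound b b' tau : 0 < b -> 0 <= b' -> 0 < tau ->
  ETV pU W R0 n <= EZpow pU W R0 b ^ n * / Rpower tau b
     + / 2 * (Rpower tau (b' / 2) * ESqrtZ pU W R0 b' ^ n).
Proof.
move=> hb hb' ht.
have [hM1 hM0] := cbsize_ge.
pose A (x : {ffun 'I_n -> U}) (y : {ffun 'I_n -> V}) := if Rle_dec (zn x y) tau then true else false.
have H := @abs_bound _ px (cbsize R0 n) px0 px1 hM0 _ wx (fun y => QVn pU W y) A wx0 q_eq.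
apply: Rle_trans H _.
apply: Rplus_le_compat.
  rewrite -(T1eq b) Rmult_comm -sum_scal; apply: sum_le => x _; rewrite -sum_scal; apply: sum_le => y _.
  have hP : 0 <= px x * wx x y by have := px0 x; have := wx0 x y; nra.
  have hr1 := Rpower_pos tau b.
  rewrite /A; case: (Rle_dec (zn x y) tau) => hz /=.
    apply: Rmult_le_pos; first by apply: Rlt_le; apply: Rinv_0_lt_compat.
    apply: Rmult_le_pos => //; apply: Rlt_le; exact: Rpower_pos.
  have hr2 : Rpower tau b <= Rpower (zn x y) b by apply: Rle_Rpower_l; lra.
  have h1 : 1 <= Rpower (zn x y) b * / Rpower tau b.
    rewrite -(Rinv_r (Rpower tau b)); last lra.
    apply: Rmult_le_compat_r => //; apply: Rlt_le; exact: Rinv_0_lt_compat.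
  have -> : / Rpower tau b * (px x * wx x y * Rpower (zn x y) b) = (px x * wx x y) * (Rpower (zn x y) b * / Rpower tau b) by ring.
  nra.
apply: Rmult_le_compat_l; first lra.
have hK := invM_le.
have hsq : sqrt (Rpower tau b') = Rpower tau (b' / 2).
  rewrite -{1}(Rplus_half_diag b') Rpower_plus sqrt_square //; apply: Rlt_le; exact: Rpower_pos.
apply: Rle_trans (_ : \big[Rplus/0]_(y : {ffun 'I_n -> V}) sqrt (Rpower tau b' * \big[Rmult/1]_(t < n) Gf (1 - b') (y t)) <= _).
  apply: sum_le => y _; apply: sqrt_le_1_alt.
  rewrite -G_eq -!sum_scal; apply: sum_le => x _.
  have hP : 0 <= px x * wx x y by have := px0 x; have := wx0 x y; nra.
  have hQ := QVn0 y.
  have hr := Rpower_pos tau b'.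
  have hR : 0 <= Rpower tau b' * (QVn pU W y * (px x * wx x y) * Rpower (zn x y) (1 - b')).
    have := Rpower_pos (zn x y) (1 - b'); move=> h; apply: Rmult_le_pos; first lra.
    apply: Rmult_le_pos; [nra | lra].
  rewrite /A; case: (Rle_dec (zn x y) tau) => hz /=; last by rewrite Rmult_0_r.
  change (wx x y * (wx x y * 1)) with (wx x y ^ 2).
  case: (Rle_lt_or_eq_dec _ _ hP) => hP'; last first.
    have -> : px x * wx x y ^ 2 = (px x * wx x y) * wx x y by ring.
    rewrite -hP' !Rmult_0_l !Rmult_0_r; lra.
  have zp := zn_pos hP'.
  have e := zq hP'.
  have hiM : 0 < / INR (cbsize R0 n) by apply: Rinv_0_lt_compat.
  have s1 : / INR (cbsize R0 n) * (px x * wx x y ^ 2) <= (px x * wx x y) * (zn x y * QVn pU W y).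
    rewrite e; have := wx0 x y; move=> hw.
    have : 0 <= px x * wx x y ^ 2 by nra.
    move=> h2; have -> : px x * wx x y * (Rpower 2 (- R0) ^ n * wx x y) = Rpower 2 (- R0) ^ n * (px x * wx x y ^ 2) by ring.
    by apply: Rmult_le_compat_r.
  have s2 : zn x y <= Rpower tau b' * Rpower (zn x y) (1 - b').
    rewrite -{1}(Rpower_1 (zn x y)) // -{1}(_ : b' + (1 - b') = 1); last ring.
    rewrite Rpower_plus; apply: Rmult_le_compat_r; first by apply: Rlt_le; apply: Rpower_pos.
    apply: Rle_Rpower_l; lra.
  apply: Rle_trans s1 _.
  have -> : Rpower tau b' * (QVn pU W y * (px x * wx x y) * Rpower (zn x y) (1 - b'))
     = (px x * wx x y * QVn pU W y) * (Rpower tau b' * Rpower (zn x y) (1 - b')) by ring.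
  have -> : px x * wx x y * (zn x y * QVn pU W y) = (px x * wx x y * QVn pU W y) * zn x y by ring.
  apply: Rmult_le_compat_l => //; nra.
rewrite ESqrt_eq -prod_const_ord -(sum_prod_ffun (fun t v => sqrt (Gf (1 - b') v))). rewrite -sum_scal.
apply: Req_le; apply: eq_bigr => y _.
rewrite sqrt_mult_alt ?hsq ?sqrt_prod //; first by move=> t _; apply: Gf0.
by apply: Rlt_le; apply: Rpower_pos.
Qed.

Lemma Rpower0 x : Rpower x 0 = 1.
Proof. by rewrite /Rpower Rmult_0_l exp_0. Qed.

Lemma EZpow0 : EZpow pU W R0 0 = 1.
Proof.
rewrite /EZpow /rsum -[RHS]sum_pUV; apply: eq_bigr => u _; apply: eq_bigr => v _.
by rewrite Rpower0 Rmult_1_r.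
Qed.

Lemma EZpow_pos b : 0 < EZpow pU W R0 b.
Proof.
have [u [v h]] := exists_pos.
have hu : forall u, 0 <= \big[Rplus/0]_(v : V) (pUV pU W u v * Rpower (Zrv pU W R0 u v) b).
  move=> u'; apply: sum_ge0 => v' _; apply: Rmult_le_pos; first exact: pUV0.
  apply: Rlt_le; exact: Rpower_pos.
apply: Rlt_le_trans (term_le_sum (F := fun u => \big[Rplus/0]_(v : V) (pUV pU W u v * Rpower (Zrv pU W R0 u v) b)) u hu).
apply: Rlt_le_trans (term_le_sum (F := fun v => pUV pU W u v * Rpower (Zrv pU W R0 u v) b) v _).
  apply: Rmult_lt_0_compat => //; exact: Rpower_pos.
move=> v'; apply: Rmult_le_pos; first exact: pUV0.
apply: Rlt_le; exact: Rpower_pos.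
Qed.

Lemma ESqrt_pos b' : 0 < ESqrtZ pU W R0 b'.
Proof.
have [u [v h]] := exists_pos.
rewrite ESqrt_eq.
have hs : forall v, 0 <= sqrt (Gf (1 - b') v) by move=> v'; apply: sqrt_pos.
apply: Rlt_le_trans (term_le_sum (F := fun v => sqrt (Gf (1 - b') v)) v hs).
apply: sqrt_lt_R0.
have hg : forall u, 0 <= pV pU W v * pUV pU W u v * Rpower (Zrv pU W R0 u v) (1 - b').
  move=> u'; apply: Rmult_le_pos; last by apply: Rlt_le; apply: Rpower_pos.
  apply: Rmult_le_pos; [exact: pV0 | exact: pUV0].
apply: Rlt_le_trans (term_le_sum (F := fun u => pV pU W v * pUV pU W u v * Rpower (Zrv pU W R0 u v) (1 - b')) u hg).
have := pUV_le u v; have := Rpower_pos (Zrv pU W R0 u v) (1 - b'); move=> h1 h2.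
apply: Rmult_lt_0_compat => //; apply: Rmult_lt_0_compat => //; lra.
Qed.

Lemma ETV_ge0 m : 0 <= ETV pU W R0 m.
Proof.
apply: sum_ge0 => c _; apply: Rmult_le_pos.
  apply: prod_ge0 => j _; apply: prod_ge0 => t _; exact: pU0.
apply: Rmult_le_pos; first lra.
apply: sum_ge0 => y _; exact: Rabs_pos.
Qed.

Lemma ETV_le1 : ETV pU W R0 n <= 1.
Proof.
have [hM1 hM0] := cbsize_ge.
have H := @abs_bound _ px (cbsize R0 n) px0 px1 hM0 _ wx (fun y => QVn pU W y) (fun _ _ => false) wx0 q_eq.
apply: Rle_trans H _.
have -> : \big[Rplus/0]_(y : {ffun 'I_n -> V}) sqrt (/ INR (cbsize R0 n) * \big[Rplus/0]_(x : {ffun 'I_n -> U}) 0) = 0.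
  by rewrite big1 // => y _; rewrite big1 // Rmult_0_r sqrt_0.
have := T1eq 0; rewrite EZpow0 pow1 => <-.
apply: Req_le; rewrite Rmult_0_r Rplus_0_r; apply: eq_bigr => x _; apply: eq_bigr => y _.
by rewrite Rpower0 Rmult_1_r.
Qed.

End Main.

Lemma ln2_pos : 0 < ln 2.
Proof. have := ln_lt_2; lra. Qed.

Lemma final_alg (a c b b' : R) (n : nat) : 0 < a -> 0 < c -> 0 < b -> 0 <= b' ->
  exists tau, 0 < tau /\
  a ^ n * / Rpower tau b + / 2 * (Rpower tau (b' / 2) * c ^ n)
  = 3 / 2 * Rpower 2 (- (/ (2 * b + b') * (- b' * log2 a - 2 * b * log2 c) * INR n)).
Proof.
move=> ha hc hb hb'.
have l2 := ln2_pos.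
set L := 2 * INR n / (2 * b + b') * (ln a - ln c).
exists (exp L); split; first exact: exp_pos.
rewrite -!Rpower_pow // /Rpower !ln_exp /log2.
set E := - (/ (2 * b + b') * (- b' * (ln a / ln 2) - 2 * b * (ln c / ln 2)) * INR n) * ln 2.
have e1 : INR n * ln a - b * L = E by rewrite /E /L; field; lra.
have e2 : b' / 2 * L + INR n * ln c = E by rewrite /E /L; field; lra.
rewrite -exp_Ropp -exp_plus -exp_plus (_ : INR n * ln a + - (b * L) = E); last by rewrite -e1.
rewrite e2; lra.
Qed.

Lemma deriv_sum (I : Type) (r : seq I) (P : pred I) (g : I -> R -> R) (dg : I -> R) x :
  (forall i, derivable_pt_lim (g i) x (dg i)) ->
  derivable_pt_lim (fun y => \big[Rplus/0]_(i <- r | P i) g i y) x (\big[Rplus/0]_(i <- r | P i) dg i).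
Proof.
move=> h; elim: r => [|i r IH].
  rewrite big_nil.
  have -> : (fun y => \big[Rplus/0]_(i <- [::] | P i) g i y) = fun _ => 0.
    by apply: functional_extensionality => y; rewrite big_nil.
  exact: derivable_pt_lim_const.
rewrite big_cons.
have -> : (fun y => \big[Rplus/0]_(j <- i :: r | P j) g j y) =
   fun y => (if P i then g i y else 0) + \big[Rplus/0]_(j <- r | P j) g j y.
  apply: functional_extensionality => y; rewrite big_cons; case: (P i) => //; ring.
case: (P i).
  exact: (derivable_pt_lim_plus (g i) (fun y => \big[Rplus/0]_(j <- r | P j) g j y)).
rewrite -(Rplus_0_l (\big[Rplus/0]_(i0 <- r | P i0) dg i0)).
exact: (derivable_pt_lim_plus (fun _ => 0) (fun y => \big[Rplus/0]_(j <- r | P j) g j y) _ _ _ (derivable_pt_lim_const 0 x)).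
Qed.

Lemma deriv_term (p L : R) : derivable_pt_lim (fun b => p * exp (b * L)) 0 (p * L).
Proof.
have h1 : derivable_pt_lim (fun b => b * L) 0 (1 * L).
  exact: (derivable_pt_lim_scal_right id 0 1 L (derivable_pt_lim_id 0)).
have h2 := derivable_pt_lim_comp (fun b => b * L) exp 0 (1 * L) (exp (0 * L)) h1 (derivable_pt_lim_exp _).
have h3 := derivable_pt_lim_scal _ p _ _ h2.
rewrite Rmult_0_l exp_0 in h3.
have -> : p * L = p * (1 * (1 * L)) by ring.
exact: h3.
Qed.

Lemma deriv_neg (f : R -> R) l : derivable_pt_lim f 0 l -> l < 0 -> exists h, 0 < h /\ f h < f 0.
Proof.
move=> hd hl.
have [d hdel] := hd (- l / 2) ltac:(lra).
have dp := cond_pos d.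
exists (d / 2); split; first lra.
have := hdel (d / 2) ltac:(lra) ltac:(rewrite Rabs_pos_eq; lra).
rewrite Rplus_0_l => hh.
have hq : (f (d / 2) - f 0) / (d / 2) < l / 2 by move: hh; split_Rabs; lra.
have : f (d / 2) - f 0 < 0.
  have : (f (d / 2) - f 0) / (d / 2) < 0 by lra.
  move=> h0; apply: (Rmult_lt_reg_r (/ (d / 2))); first by apply: Rinv_0_lt_compat; lra.
  by rewrite Rmult_0_l.
lra.
Qed.

Lemma sum2_aux (T1 T2 : finType) (m p : T1 -> T2 -> R) k r :
  \big[Rplus/0]_(u : T1) \big[Rplus/0]_(v : T2) (k * (m u v - r * p u v))
  = k * (\big[Rplus/0]_(u : T1) \big[Rplus/0]_(v : T2) m u v - r * \big[Rplus/0]_(u : T1) \big[Rplus/0]_(v : T2) p u v).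
Proof.
rewrite (eq_bigr (fun u => k * (\big[Rplus/0]_(v : T2) m u v - r * \big[Rplus/0]_(v : T2) p u v))); last first.
  by move=> u _; rewrite sum_scal sum_sub sum_scal.
by rewrite sum_scal sum_sub sum_scal.
Qed.

Section Main3.
Variables (U V : finType) (pU : U -> R) (W : U -> V -> R) (R0 : R).
Hypotheses (hpU : is_pmf pU) (hW : is_channel W).

Lemma deriv_EZ : derivable_pt_lim (fun b => EZpow pU W R0 b) 0
   (\big[Rplus/0]_(u : U) \big[Rplus/0]_(v : V) (pUV pU W u v * ln (Zrv pU W R0 u v))).
Proof.
rewrite /EZpow /rsum; apply: deriv_sum => u; apply: deriv_sum => v.
exact: deriv_term.
Qed.

Lemma slope : \big[Rplus/0]_(u : U) \big[Rplus/0]_(v : V) (pUV pU W u v * ln (Zrv pU W R0 u v))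
  = ln 2 * (mutinfo pU W - R0).
Proof.
have l2 := ln2_pos.
rewrite /mutinfo /rsum.
transitivity (\big[Rplus/0]_(u : U) \big[Rplus/0]_(v : V)
  (ln 2 * ((if Rlt_dec 0 (pUV pU W u v) then pUV pU W u v * log2 (pUV pU W u v / (pU u * pV pU W v)) else 0)
    - R0 * pUV pU W u v))).
  apply: eq_bigr => u _; apply: eq_bigr => v _.
  case: Rlt_dec => h.
    have [h1 [h2 h3]] := pUV_pos hpU hW h.
    rewrite /Zrv ln_mult; last first.
      by apply: Rdiv_lt_0_compat => //; apply: Rmult_lt_0_compat.
      exact: Rpower_pos.
    rewrite ln_Rpower /log2 /=; field; lra.
  have e : pUV pU W u v = 0 by have := pUV0 hpU hW u v; lra.
  rewrite /= e; ring.
rewrite (sum2_aux (fun u v => if Rlt_dec 0 (pUV pU W u v) then pUV pU W u v * log2 (pUV pU W u v / (pU u * pV pU W v)) else 0) (fun u v => pUV pU W u v)).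
by rewrite (sum_pUV hpU hW) Rmult_1_r.
Qed.

Lemma ESqrt1 : ESqrtZ pU W R0 1 = 1.
Proof.
rewrite /ESqrtZ /rsum.
transitivity (\big[Rplus/0]_(v : V) pV pU W v).
  apply: eq_bigr => v _.
  case: (Rle_lt_or_eq_dec _ _ (pV0 hpU hW v)) => hv; last by rewrite -hv !Rmult_0_l.
  rewrite (eq_bigr (fun u => pUV pU W u v * / pV pU W v)); last first.
    by move=> u _; rewrite Rminus_diag Rpower0 Rmult_1_r.
  rewrite (eq_bigr (fun u => / pV pU W v * pUV pU W u v)); last by move=> u _; ring.
  rewrite sum_scal (_ : / pV pU W v * \big[Rplus/0]_(u : U) pUV pU W u v = 1) ?sqrt_1 ?Rmult_1_r //.
  rewrite /pV /rsum in hv *; field; lra.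
rewrite /pV /rsum exchange_big /=.
exact: sum_pUV.
Qed.
End Main3.

Lemma part2 (U V : finType) (pU : U -> R) (W : U -> V -> R) (R0 : R) :
  is_pmf pU -> is_channel W ->
  forall (n : nat) (b b' : R), 0 <= b -> 0 <= b' -> (b, b') <> (0, 0) ->
     ETV pU W R0 n <= 3 / 2 * Rpower 2 (- (gammaf pU W R0 b b' * INR n)).
Proof.
move=> hpU hW n b b' hb hb' hne.
case: (Rle_lt_or_eq_dec _ _ hb) => hb0.
  have [tau [ht e]] := final_alg n (EZpow_pos R0 hpU hW b) (ESqrt_pos R0 hpU hW b') hb0 hb'.
  rewrite /gammaf -e.
  exact: (main_bound R0 hpU hW n hb0 hb' ht).
subst b.
have l2 := ln2_pos.
have -> : gammaf pU W R0 0 b' = 0.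
  rewrite /gammaf (EZpow0 R0 hpU hW) /log2 ln_1 /Rdiv !Rmult_0_l; ring.
rewrite Rmult_0_l Ropp_0 Rpower0.
have := ETV_le1 R0 hpU hW n; lra.
Qed.

Lemma part1 (U V : finType) (pU : U -> R) (W : U -> V -> R) (R0 : R) :
  is_pmf pU -> is_channel W -> R0 > mutinfo pU W -> Un_cv (ETV pU W R0) 0.
Proof.
move=> hpU hW hR.
have l2 := ln2_pos.
have hd := deriv_EZ pU W R0.
rewrite (slope R0 hpU hW) in hd.
have [h [hh ha]] := deriv_neg hd ltac:(nra).
rewrite (EZpow0 R0 hpU hW) in ha.
set a := EZpow pU W R0 h in ha.
have a0 : 0 < a := EZpow_pos R0 hpU hW h.
have la : ln a < 0 by rewrite -ln_1; apply: ln_increasing.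
set g := gammaf pU W R0 h 1.
have g0 : 0 < g.
  rewrite /g /gammaf (ESqrt1 R0 hpU hW) /log2 ln_1 -/a.
  have -> : / (2 * h + 1) * (- (1) * (ln a / ln 2) - 2 * h * (0 / ln 2)) = - ln a / (ln 2 * (2 * h + 1)) by field; lra.
  apply: Rdiv_lt_0_compat; first lra.
  apply: Rmult_lt_0_compat; lra.
have bnd n : ETV pU W R0 n <= 3 / 2 * (Rpower 2 (- g)) ^ n.
  rewrite -Rpower_pow; last exact: Rpower_pos.
  rewrite Rpower_mult (_ : - g * INR n = - (g * INR n)); last ring.
  apply: part2 => //; [lra | lra | case; lra].
set r := Rpower 2 (- g) in bnd.
have r0 : 0 < r := Rpower_pos 2 (- g).
have r1 : r < 1.
  rewrite /r /Rpower -exp_0; apply: exp_increasing; nra.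
move=> eps he.
have [N HN] := pow_lt_1_zero r ltac:(rewrite Rabs_pos_eq; lra) (eps * (2 / 3)) ltac:(lra).
exists N => m hm.
have := HN m hm; have := bnd m; have := ETV_ge0 W R0 hpU m.
rewrite /R_dist Rminus_0_r !Rabs_pos_eq; [lra | |]; last first.
  by apply: pow_le; lra.
by have := ETV_ge0 W R0 hpU m.
Qed.

Theorem mainTheorem3 (U V : finType) (pU : U -> R) (W : U -> V -> R) (R0 : R) :
  is_pmf pU -> is_channel W -> 0 <= R0 ->
  (R0 > mutinfo pU W -> Un_cv (ETV pU W R0) 0) /\
  (forall (n : nat) (b b' : R), 0 <= b -> 0 <= b' -> (b, b') <> (0, 0) ->
     ETV pU W R0 n <= 3 / 2 * Rpower 2 (- (gammaf pU W R0 b b' * INR n))).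
Proof.
move=> hpU hW _; split; [exact: part1 | exact: part2].
Qed.
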